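(* Let $n\ge1$, $N=2^n$, and let $B_m$ ($0\le m\le n-1$) be the maps defined below. For a finitely supported $H:\{0,1\}^n\times\{0,1\}^n\times\mathbb{Z}\times\mathbb{Z}\to\mathbb{R}$, regarded as a function on $\{0,1\}^0\times\{0,1\}^n\times\{0,1\}^n\times\mathbb{Z}^2$, the function $P=B_0\circ B_1\circ\cdots\circ B_{n-1}(H)$, defined on $\{0,1\}^n\times\{0,1\}^0\times\{0,1\}^0\times\mathbb{Z}^2$, satisfies, for all $\mathbf v\in\{0,1\}^n$ and $e_1,e_2\in\mathbb{Z}$, $$P(\mathbf v\mid\emptyset\mid\emptyset\mid e_1\mid e_2)=\sum_{\mathbf s_1\in\{0,1\}^n}\sum_{\mathbf s_2\in\{0,1\}^n}H\big(\mathbf s_1\mid\mathbf s_2\mid e_1-l^n_{\lambda(\mathbf s_1)}(\mathbf v)\mid e_2-l^n_{\lambda(\mathbf s_2)}(\mathbf v)\big).$$ Equivalently, $(x,y,z)\mapsto P(\lambda^{-1}(x)\mid\emptyset\mid\emptyset\mid y\mid z)$ is the adjoint of the linear map $f\mapsto \tilde f$, $\tilde f(\mathbf s_1\mid\mathbf s_2\mid d_1\mid d_2)=\sum_{\mathbf u\in\{0,1\}^n}f\big(\lambda(\mathbf u),\,l^n_{\lambda(\mathbf s_1)}(\mathbf u)+d_1,\,l^n_{\lambda(\mathbf s_2)}(\mathbf u)+d_2\big)$ (the 3D discrete John transform), acting on finitely supported $f:\{0,\dots,N-1\}\times\mathbb{Z}^2\to\mathbb{R}$.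
   Context: Bit vectors: for $\mathbf u=(u_0,\dots,u_{k-1})\in\{0,1\}^k$, $\lambda(\mathbf u)=\sum_{i=0}^{k-1}u_i2^i$ (first entry least significant), $\lambda(\emptyset)=0$; $(a,\boldsymbol\sigma)$ denotes the vector with first entry $a$ followed by the entries of $\boldsymbol\sigma$. Discrete lines: $l^0_s(\emptyset)=0$ and $l^k_s(u_0,\dots,u_{k-1})=l^{k-1}_{\lfloor s/2\rfloor}(u_0,\dots,u_{k-2})+u_{k-1}\lfloor (s+1)/2\rfloor$ for $k\ge1$, $s\ge0$. For $0\le m\le n-1$ and finitely supported $H$ on $\{0,1\}^{n-m-1}\times\{0,1\}^{m+1}\times\{0,1\}^{m+1}\times\mathbb{Z}^2$, $B_mH$ is the function on $\{0,1\}^{n-m}\times\{0,1\}^m\times\{0,1\}^m\times\mathbb{Z}^2$ given by $(B_mH)((w,\mathbf v)\mid\boldsymbol\sigma_1\mid\boldsymbol\sigma_2\mid d_1\mid d_2)=\sum_{a,b\in\{0,1\}}H(\mathbf v\mid(a,\boldsymbol\sigma_1)\mid(b,\boldsymbol\sigma_2)\mid d_1-w(a+\lambda(\boldsymbol\sigma_1))\mid d_2-w(b+\lambda(\boldsymbol\sigma_2)))$. *)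

(* Defs.v *)
From mathcomp Require Import all_boot all_order all_algebra.
Set Implicit Arguments. Unset Strict Implicit. Unset Printing Implicit Defensive.
Import Order.TTheory GRing.Theory Num.Theory.
Local Open Scope ring_scope.

(* Bit vectors are represented as seq bool (first entry = least significant). *)
Fixpoint lam (u : seq bool) : nat :=
  match u with [::] => 0%N | b :: u' => (b + 2 * lam u')%N end.

Fixpoint line (k s : nat) (u : seq bool) : nat :=
  match k with
  | 0 => 0%N
  | k'.+1 => (line k' s./2 u + nth false u k' * (s.+1)./2)%N
  end.

(* A function of (first bit vector | sigma_1 | sigma_2 | d_1 | d_2). *)
Definition fn5 (R : Type) := seq bool -> seq bool -> seq bool -> int -> int -> R.

(* The formula does not depend on m (m only fixes the sizes of the arguments);
   on arguments of the sizes prescribed in the paper it is exactly B_m. *)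
Definition B (R : ringType) (m : nat) (H : fn5 R) : fn5 R :=
  fun wv s1 s2 d1 d2 =>
    match wv with
    | [::] => 0
    | w :: v => \sum_(a : bool) \sum_(b : bool)
        H v (a :: s1) (b :: s2)
          (d1 - ((w * (a + lam s1))%N)%:Z) (d2 - ((w * (b + lam s2))%N)%:Z)
    end.

Definition embedH (R : ringType) (n : nat)
    (H : n.-tuple bool -> n.-tuple bool -> int -> int -> R) : fn5 R :=
  fun v s1 s2 d1 d2 =>
    match v with
    | [::] =>
        match (insub s1 : option (n.-tuple bool)), (insub s2 : option (n.-tuple bool)) with
        | Some t1, Some t2 => H t1 t2 d1 d2
        | _, _ => 0
        end
    | _ => 0
    end.

Definition Bcomp (R : ringType) (n : nat) (G : fn5 R) : fn5 R :=
  foldr (fun m F => B m F) G (iota 0 n).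

Definition finitely_supported (R : ringType) (n : nat)
    (H : n.-tuple bool -> n.-tuple bool -> int -> int -> R) : Prop :=
  exists M : nat, forall s1 s2 d1 d2,
    H s1 s2 d1 d2 != 0 -> (`|d1| <= M)%N /\ (`|d2| <= M)%N.

(* Main.v *)
Require Import Defs.
From mathcomp Require Import all_boot all_order all_algebra.
From mathcomp Require Import zify.
Import GRing.Theory Num.Theory.
Local Open Scope ring_scope.

Lemma lam_cat (x y : seq bool) : lam (x ++ y) = (lam x + 2 ^ size x * lam y)%N.
Proof. elim: x => [|b x IH] /=; first by rewrite mul1n. rewrite IH expnS; lia. Qed.

Lemma lam_lt (x : seq bool) : (lam x < 2 ^ size x)%N.
Proof. elim: x => [|b x IH] //=; rewrite expnS; case: b => /=; lia. Qed.

Lemma line_cons k S w v :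
  line k.+1 S (w :: v) = (w * (S %/ 2 ^ k).+1./2 + line k S v)%N.
Proof.
elim: k S => [|k IH] S; first by rewrite /= divn1 addn0 add0n.
change (line k.+1 S./2 (w::v) + nth false v k * (S.+1)./2
   = w * (S %/ 2 ^ k.+1).+1./2 + (line k S./2 v + nth false v k * (S.+1)./2))%N.
rewrite IH -addnA; congr (_ * _ + _)%N.
by rewrite -!divn2 -divnMA -expnS.
Qed.

Fixpoint off (v u s : seq bool) : nat :=
  match v, u with
  | w :: v', a :: u' => (w * (a + lam s) + off v' u' (a :: s))%N
  | _, _ => 0%N
  end.

Lemma off_line v u s : size u = size v ->
  off v u s = line (size v) (lam (catrev u s)) v.
Proof.
elim: v u s => [|w v IH] [|a u] s //= [Hs].
rewrite IH // -/(line (size v).+1 _ (w :: v)) line_cons; congr (_ * _ + _)%N.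
rewrite catrevE lam_cat size_rev Hs [(lam (rev u) + _)%N]addnC [(2 ^ _ * _)%N]mulnC.
rewrite divnMDl ?expn_gt0 // divn_small; last by rewrite -Hs -size_rev lam_lt.
rewrite addn0 /=; case: a => /=.
  by rewrite !add0n mul2n doubleK add1n.
by rewrite !add0n mul2n uphalf_double.
Qed.

Lemma Bcomp_iter (R : ringType) (l : seq nat) (G : fn5 R) :
  foldr (fun m F => B m F) G l = iter (size l) (B 0) G.
Proof. by elim: l => [|m l IH] //=; rewrite IH. Qed.

Lemma tuple_sum0 (R : ringType) (f : 0.-tuple bool -> R) :
  \sum_(t : 0.-tuple bool) f t = f [tuple].
Proof. by rewrite (big_pred1 [tuple]) // => t; apply/esym/eqP; exact: tuple0. Qed.

Lemma tuple_sum_cons (R : ringType) k (G : seq bool -> R) :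
  \sum_(t : k.+1.-tuple bool) G t = \sum_(a : bool) \sum_(t : k.-tuple bool) G (a :: t).
Proof.
rewrite pair_big /=.
rewrite (reindex (fun p : bool * k.-tuple bool => [tuple of p.1 :: p.2])) //=.
exists (fun t : k.+1.-tuple bool => (thead t, [tuple of behead t])).
  by move=> [a t] _ /=; congr (_, _); apply: val_inj.
by move=> t _; rewrite [RHS]tuple_eta.
Qed.

Lemma main_gen (R : ringType) k (F : fn5 R) (v : seq bool) s1 s2 d1 d2 :
  size v = k ->
  iter k (B 0) F v s1 s2 d1 d2 =
  \sum_(t1 : k.-tuple bool) \sum_(t2 : k.-tuple bool)
    F [::] (catrev t1 s1) (catrev t2 s2)
      (d1 - (off v t1 s1)%:Z) (d2 - (off v t2 s2)%:Z).
Proof.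
elim: k v s1 s2 d1 d2 => [|k IH] [|w v] s1 s2 d1 d2 // Hv.
  by rewrite tuple_sum0 tuple_sum0 /= !subr0.
case: Hv => Hv.
transitivity (\sum_(a:bool) \sum_(t1 : k.-tuple bool) \sum_(b:bool)
   \sum_(t2 : k.-tuple bool) F [::] (catrev t1 (a::s1)) (catrev t2 (b::s2))
     (d1 - (w*(a+lam s1))%N%:Z - (off v t1 (a::s1))%:Z)
     (d2 - (w*(b+lam s2))%N%:Z - (off v t2 (b::s2))%:Z)).
  rewrite iterS /B; apply: eq_bigr => a _.
  under eq_bigr => b _ do rewrite IH //.
  exact: exchange_big.
rewrite (@tuple_sum_cons _ k (fun t1 : seq bool => \sum_(t2 : k.+1.-tuple bool)
   F [::] (catrev t1 s1) (catrev t2 s2) (d1 - (off (w::v) t1 s1)%:Z)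
     (d2 - (off (w::v) t2 s2)%:Z))).
apply: eq_bigr => a _; apply: eq_bigr => t1 _.
rewrite (@tuple_sum_cons _ k (fun t2 : seq bool =>
   F [::] (catrev (a :: t1) s1) (catrev t2 s2) (d1 - (off (w::v) (a :: t1) s1)%:Z)
     (d2 - (off (w::v) t2 s2)%:Z))).
apply: eq_bigr => b _; apply: eq_bigr => t2 _ /=.
by rewrite !PoszD !opprD !addrA.
Qed.

Lemma rev_tuple_inj n : injective (fun t : n.-tuple bool => [tuple of rev t]).
Proof. by move=> x y /(congr1 val) /= /(congr1 rev); rewrite !revK => /val_inj. Qed.

Theorem mainTheorem4 (R : realFieldType) (n : nat) (hn : (1 <= n)%N)
    (H : n.-tuple bool -> n.-tuple bool -> int -> int -> R)
    (Hfin : finitely_supported H)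
    (v : n.-tuple bool) (e1 e2 : int) :
  Bcomp n (embedH H) v [::] [::] e1 e2 =
  \sum_(s1 : n.-tuple bool) \sum_(s2 : n.-tuple bool)
     H s1 s2 (e1 - (line n (lam s1) v)%:Z) (e2 - (line n (lam s2) v)%:Z).
Proof.
rewrite /Bcomp Bcomp_iter size_iota (@main_gen _ n) ?size_tuple //.
rewrite (reindex_inj (@rev_tuple_inj n)); apply: eq_bigr => t1 _.
rewrite (reindex_inj (@rev_tuple_inj n)); apply: eq_bigr => t2 _ /=.
rewrite !off_line ?size_rev ?size_tuple // /embedH !catrevE !cats0 !revK !valK.
by [].
Qed.
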